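(* Let $L:G\to[0,\infty)$ be proper. (1) If $G$ has polynomial H-growth with respect to $L$, then there exists $s>0$ such that for every normalized 2-cocycle $\sigma$ and every $x\in C^*_r(G,\sigma)$ with $\sum_{g\in G}|\widehat x(g)|^2(1+L(g))^s<\infty$, the Fourier series of $x$ converges to $x$ in operator norm. (2) If $G$ has subexponential H-growth with respect to $L$, then for every normalized 2-cocycle $\sigma$ and every $x\in C^*_r(G,\sigma)$ such that $\sum_{g\in G}|\widehat x(g)|^2\exp(tL(g))<\infty$ for some $t>0$, the Fourier series of $x$ converges to $x$ in operator norm.
   Context: $G$ is a countable discrete group with identity $e$; $\sigma:G\times G\to\mathbb{T}$ is a normalized 2-cocycle ($\sigma(g,h)\sigma(gh,k)=\sigma(h,k)\sigma(g,hk)$, $\sigma(g,e)=\sigma(e,g)=1$); $\Lambda_\sigma(g)$ is the unitary on $\ell^2(G)$ with $(\Lambda_\sigma(g)\xi)(h)=\sigma(g,g^{-1}h)\xi(g^{-1}h)$; $\lambda=\Lambda_1$. $C^*_r(G,\sigma)$ is the operator-norm closed $*$-algebra generated by $\Lambda_\sigma(G)$ in $B(\ell^2(G))$. For $x\in C^*_r(G,\sigma)$, $\widehat x=x\delta_e\in\ell^2(G)$, and its Fourier series is $\sum_g\widehat x(g)\Lambda_\sigma(g)$ (convergence meaning convergence of the net of finite partial sums). $L$ proper means $L^{-1}([0,t])$ finite for all $t$. $\mathcal{K}(G)$ = finitely supported functions; $\pi_\lambda(f)=\sum_g f(g)\lambda(g)$. The Haagerup content of a finite nonempty $E\subseteq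 G$ is $c(E)=\sup\{\|\pi_\lambda(f)\|\mid f\in\mathcal{K}(G),\ \mathrm{supp}f\subseteq E,\ \|f\|_2=1\}$. With $B_{r,L}=\{g\mid L(g)\le r\}$: polynomial H-growth w.r.t. $L$ means $c(B_{r,L})\le K(1+r)^p$ for some $K,p>0$ and all $r\ge0$; subexponential H-growth means for every $b>1$ there is $r_0$ with $c(B_{r,L})<b^r$ for $r\ge r_0$. *)

(* Defs.v *)
From HB Require Import structures.
From mathcomp Require Import all_boot all_order all_algebra.
From mathcomp Require Import finmap.
From mathcomp Require Import all_classical all_reals all_analysis.
From mathcomp.real_closed Require Import complex.
Set Implicit Arguments. Unset Strict Implicit. Unset Printing Implicit Defensive.
Import Order.TTheory GRing.Theory Num.Theory.
Local Open Scope ring_scope.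
Local Open Scope classical_set_scope.

Record group_laws (G : Type) := GroupLaws {
  gmul : G -> G -> G;
  gone : G;
  ginv : G -> G;
  gmulA : forall x y z, gmul x (gmul y z) = gmul (gmul x y) z;
  gmul1 : forall x, gmul gone x = x;
  gmulV : forall x, gmul (ginv x) x = gone }.

Section TwistedGroupCstar.
Variables (R : realType) (G : countType) (gl : group_laws G).
Local Notation C := (R[i]).
Local Notation gm := (gmul gl).
Local Notation e := (gone gl).
Local Notation gi := (ginv gl).

Definition cabs (z : C) : R := Normc.normc z.

Definition cocycle (sigma : G -> G -> C) : Prop :=
  (forall g h, cabs (sigma g h) = 1) /\
  (forall g h k, sigma g h * sigma (gm g h) k = sigma h k * sigma g (gm h k)) /\
  (forall g, sigma g e = 1 /\ sigma e g = 1).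

Definition op := (G -> C) -> (G -> C).

Definition Lambda (sigma : G -> G -> C) (g : G) : op :=
  fun xi h => sigma g (gm (gi g) h) * xi (gm (gi g) h).

Definition l2norm (xi : G -> C) : \bar R :=
  sqrte (\esum_(g in [set: G]) ((cabs (xi g)) ^+ 2)%:E).

Definition opnorm (T : op) : \bar R :=
  ereal_sup [set l2norm (T xi) | xi in [set xi | (l2norm xi <= 1%:E)%E]].

Definition opsub (T S : op) : op := fun xi h => T xi h - S xi h.

Definition pisum (sigma : G -> G -> C) (s : {fset G}) (c : G -> C) : op :=
  fun xi h => \sum_(g <- s) c g * Lambda sigma g xi h.

(* x belongs to C*_r(G, sigma): operator-norm limit of elements of span Lambda_sigma(G)
   (= the *-algebra generated by Lambda_sigma(G)) *)
Definition in_Cred (sigma : G -> G -> C) (x : op) : Prop :=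
  forall eps : R, 0 < eps ->
    exists (s : {fset G}) (c : G -> C), (opnorm (opsub x (pisum sigma s c)) < eps%:E)%E.

Definition delta_e : G -> C := fun h => if h == e then 1 else 0.
Definition xhat (x : op) : G -> C := x delta_e.

Definition fourier_converges (sigma : G -> G -> C) (x : op) : Prop :=
  forall eps : R, 0 < eps -> exists F0 : {fset G}, forall F : {fset G},
    fsubset F0 F -> (opnorm (opsub x (pisum sigma F (xhat x))) < eps%:E)%E.

Definition trivial_cocycle : G -> G -> C := fun _ _ => 1.

(* Haagerup content of E : sup ||pi_lambda(f)|| over finitely supported f,
   supp f in E, ||f||_2 = 1 *)
Definition hcontent (E : set G) : \bar R :=
  ereal_sup [set y | exists (s : {fset G}) (f : G -> C),
     [set` s] `<=` E /\ (forall g, g \notin s -> f g = 0) /\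
     l2norm f = 1%:E /\ y = opnorm (pisum trivial_cocycle s f)].

Definition lball (L : G -> R) (r : R) : set G := [set g | L g <= r].

Definition proper_length (L : G -> R) : Prop :=
  forall t : R, finite_set (lball L t).

Definition poly_Hgrowth (L : G -> R) : Prop :=
  exists K p : R, 0 < K /\ 0 < p /\
    forall r : R, 0 <= r -> (hcontent (lball L r) <= (K * (1 + r) `^ p)%:E)%E.

Definition subexp_Hgrowth (L : G -> R) : Prop :=
  forall b : R, 1 < b -> exists r0 : R, forall r : R, r0 <= r ->
    (hcontent (lball L r) < (b `^ r)%:E)%E.

End TwistedGroupCstar.

(* Main.v *)
Require Import Defs.
From HB Require Import structures.
From mathcomp Require Import all_boot all_order all_algebra.
From mathcomp Require Import finmap.
From mathcomp Require Import all_classical all_reals all_analysis.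
From mathcomp.real_closed Require Import complex.
From mathcomp Require Import ring lra zify.
Set Implicit Arguments. Unset Strict Implicit. Unset Printing Implicit Defensive.
Import Order.TTheory GRing.Theory Num.Theory.
Local Open Scope ring_scope.
Local Open Scope classical_set_scope.

Section Basic.
Variables (R : realType) (G : countType).
Local Notation C := (R[i]).

Lemma cabs_ge0 (z : C) : 0 <= cabs z.
Proof. rewrite /cabs; case: z => a b /=; exact: sqrtr_ge0. Qed.

Lemma cabsM (z w : C) : cabs (z * w) = cabs z * cabs w.
Proof. exact: Normc.normcM. Qed.

Lemma cabsD (z w : C) : cabs (z + w) <= cabs z + cabs w.
Proof. exact: le_normcD. Qed.

Lemma cabsN (z : C) : cabs (- z) = cabs z.
Proof. exact: normcN. Qed.

Lemma cabsB (z w : C) : cabs (z - w) = cabs (w - z).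
Proof. by rewrite -cabsN opprB. Qed.

Lemma cabsR (r : R) : cabs ((r%:C)%C : C) = `|r|.
Proof. by rewrite /cabs /= expr0n /= addr0 sqrtr_sqr. Qed.

Lemma cabs1 : cabs (1 : C) = 1.
Proof. exact: Normc.normc1. Qed.

Lemma cabs0 : cabs (0 : C) = 0.
Proof. exact: Normc.normc0. Qed.

Lemma cabs_sum (I : Type) (s : seq I) (P : pred I) (F : I -> C) :
  cabs (\sum_(i <- s | P i) F i) <= \sum_(i <- s | P i) cabs (F i).
Proof.
elim: s => [|i s IH]; first by rewrite !big_nil cabs0.
rewrite !big_cons; case: (P i) => //.
by apply: le_trans (cabsD _ _) _; rewrite lerD2l.
Qed.

Lemma sum_sub (A B : {fset G}) (f : G -> R) :
  fsubset A B -> (forall g, 0 <= f g) -> \sum_(g <- A) f g <= \sum_(g <- B) f g.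
Proof.
move=> AB f0; rewrite [X in _ <= X](big_fsetID _ (mem A)) /=.
rewrite (@eq_fbigl _ _ _ _ A [fset x in B | x \in A]%fset); last first.
  move=> x; rewrite !inE /=; case xA: (x \in A); rewrite ?andbT ?andbF //.
  by symmetry; apply: (fsubsetP AB x); rewrite xA.
by rewrite lerDl sumr_ge0.
Qed.

Lemma amgm (a b l : R) : 0 < l -> 2 * (a * b) <= a ^+ 2 / l + l * b ^+ 2.
Proof.
move=> l0.
have -> : a ^+ 2 / l + l * b ^+ 2 = 2 * (a * b) + l * (b - a / l) ^+ 2.
  by field; rewrite gt_eqF.
by rewrite lerDl; apply: mulr_ge0; [apply: ltW | apply: sqr_ge0].
Qed.

Lemma wcs (I : Type) (s : seq I) (u lam : I -> R) :
  (forall i, 0 < lam i) ->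
  (\sum_(i <- s) u i) ^+ 2 <=
    (\sum_(i <- s) lam i) * \sum_(i <- s) (u i ^+ 2 / lam i).
Proof.
move=> l0.
have [Lp|] := ltP 0 (\sum_(i <- s) lam i); last first.
  case: s => [|j s']; first by rewrite !big_nil expr0n /= mul0r.
  rewrite big_cons => H; exfalso; move: H; apply/negP; rewrite -ltNge.
  by apply: ltr_pwDl; [apply: l0 | apply: sumr_ge0 => i _; apply: ltW].
set S := \sum_(i <- s) u i; set L := \sum_(i <- s) lam i.
set Q := \sum_(i <- s) _.
pose t := S / L.
have H : 2 * (S * t) <= Q + L * t ^+ 2.
  rewrite /S /Q /L big_distrl big_distrr /= [_ * t ^+ 2]mulr_suml -big_split /=.
  by apply: ler_sum => i _; apply: amgm.
have E : L * t ^+ 2 = S * t by rewrite /t; field; rewrite gt_eqF.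
rewrite E in H; have H2 : S * t <= Q by lra.
have -> : S ^+ 2 = L * (S * t) by rewrite /t; field; rewrite gt_eqF.
by rewrite ler_pM2l.
Qed.

End Basic.

Section Main.
Variables (R : realType) (G : countType) (gl : group_laws G).
Local Notation C := (R[i]).
Local Notation gm := (gmul gl).
Local Notation e := (gone gl).
Local Notation gi := (ginv gl).

Lemma gmulVr x : gm x (gi x) = e.
Proof.
have h1 := gmul1 gl; have hA := gmulA gl; have hV := gmulV gl.
set y := gi x.
transitivity (gm (gm (gi y) y) (gm x y)); first by rewrite hV h1.
rewrite -hA (hA y x y) hV h1; exact: hV.
Qed.

Lemma gmul1r x : gm x e = x.
Proof. by rewrite -(gmulV gl x) gmulA gmulVr gmul1. Qed.

Lemma ginvK x : gi (gi x) = x.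
Proof.
by rewrite -[LHS]gmul1r -(gmulV gl x) gmulA gmulV gmul1.
Qed.

Lemma ginv_eq k g : gm (gi k) g = e -> k = g.
Proof.
move=> H; have : gm k (gm (gi k) g) = gm k e by rewrite H.
by rewrite gmulA gmulVr gmul1 gmul1r => ->.
Qed.

Lemma shift_inj h : injective (fun g => gm (gi g) h).
Proof.
move=> g g' /= H.
have : gm (gm (gi g) h) (gi h) = gm (gm (gi g') h) (gi h) by rewrite H.
rewrite -!gmulA gmulVr !gmul1r => H2.
by rewrite -(ginvK g) H2 ginvK.
Qed.


Lemma sum_le_esum (f : G -> R) (s : {fset G}) : (forall g, 0 <= f g) ->
  ((\sum_(g <- s) f g)%:E <= \esum_(g in [set: G]) (f g)%:E)%E.
Proof.
move=> f0; apply: esum_ge; exists [set` s]; first by split; [exact: finite_fset|].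
by rewrite fsbig_finite ?finite_fset // set_fsetK sumEFin.
Qed.

Lemma esum_le_of (f : G -> R) (B : R) :
  (forall s : {fset G}, \sum_(g <- s) f g <= B) ->
  (\esum_(g in [set: G]) (f g)%:E <= B%:E)%E.
Proof.
move=> H; apply: ge_ereal_sup => _ [X [finX _] <-].
by rewrite fsbig_finite // sumEFin lee_fin; apply: H.
Qed.

Lemma l2_le1 (xi : G -> C) : (l2norm xi <= 1%:E)%E ->
  (\esum_(g in [set: G]) ((cabs (xi g)) ^+ 2)%:E <= 1%:E)%E.
Proof.
move=> H; rewrite -lee_sqrt ?lee01 //.
by move: H; rewrite /l2norm /= sqrtr1.
Qed.

Lemma pt_bound (T : op R G) (xi : G -> C) (M : R) (s : {fset G}) :
  (l2norm xi <= 1%:E)%E -> (opnorm T <= M%:E)%E -> 0 <= M ->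
  \sum_(h <- s) (cabs (T xi h)) ^+ 2 <= M ^+ 2.
Proof.
move=> Hx HM M0.
have H1 : (l2norm (T xi) <= M%:E)%E.
  apply: le_trans HM; apply: ereal_sup_ubound; by exists xi.
have S0 : 0 <= \sum_(h <- s) (cabs (T xi h)) ^+ 2 by apply: sumr_ge0 => h _; apply: sqr_ge0.
have H2 : ((Num.sqrt (\sum_(h <- s) (cabs (T xi h)) ^+ 2))%:E <= l2norm (T xi))%E.
  rewrite /l2norm; change (sqrte (\sum_(h <- s) (cabs (T xi h)) ^+ 2)%:E <=
     sqrte (\esum_(g in [set: G]) ((cabs (T xi g)) ^+ 2)%:E))%E.
  rewrite lee_sqrt; first by apply: sum_le_esum => g; apply: sqr_ge0.
  by apply: esum_ge0 => g _; rewrite lee_fin sqr_ge0.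
have H3 := le_trans H2 H1; rewrite lee_fin in H3.
rewrite -[X in X <= _](sqr_sqrtr S0).
by rewrite lerXn2r // ?nnegrE ?sqrtr_ge0.
Qed.


Lemma opnorm_lt (T : op R G) (B eps : R) : 0 <= B -> B < eps ^+ 2 -> 0 < eps ->
  (forall xi : G -> C, (l2norm xi <= 1%:E)%E -> forall s : {fset G},
      \sum_(h <- s) (cabs (T xi h)) ^+ 2 <= B) ->
  (opnorm T < eps%:E)%E.
Proof.
move=> B0 Be e0 H; apply: (@le_lt_trans _ _ (Num.sqrt B)%:E); last first.
  rewrite lte_fin -[X in _ < X](ger0_norm (ltW e0)) -sqrtr_sqr.
  by rewrite ltr_sqrt // exprn_gt0.
apply: ge_ereal_sup => _ [xi Hxi <-].
rewrite /l2norm; change (sqrte (\esum_(g in [set: G]) ((cabs (T xi g)) ^+ 2)%:E) <= sqrte B%:E)%E.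
by rewrite lee_sqrt ?lee_fin //; apply: esum_le_of; apply: H.
Qed.

Lemma pt_bound1 (T : op R G) (xi : G -> C) (M : R) h :
  (l2norm xi <= 1%:E)%E -> (opnorm T <= M%:E)%E -> 0 <= M ->
  cabs (T xi h) <= M.
Proof.
move=> Hx HM M0; have := pt_bound [fset h]%fset Hx HM M0.
rewrite big_seq_fset1 => H.
by rewrite -(@ler_pXn2r _ 2) ?nnegrE ?cabs_ge0.
Qed.

Lemma l2_of_le1 (xi : G -> C) :
  (\esum_(g in [set: G]) ((cabs (xi g)) ^+ 2)%:E <= 1%:E)%E -> (l2norm xi <= 1%:E)%E.
Proof.
move=> H; rewrite /l2norm.
have -> : (1%:E : \bar R) = sqrte 1%:E by rewrite /= sqrtr1.
by rewrite lee_sqrt ?lee01.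
Qed.

Lemma delta_ball : (l2norm (delta_e R gl : G -> C) <= 1%:E)%E.
Proof.
apply: l2_of_le1; apply: esum_le_of => s.
rewrite /delta_e; case: (boolP (e \in s)) => es.
  rewrite (big_fsetD1 e es) /= eqxx cabs1 expr1n big1_fset ?addr0 // => k.
  by rewrite !inE => /andP[/negPf -> _] _; rewrite cabs0 expr0n.
rewrite big1_fset ?ler01 // => k ks _.
case: eqP => [ke|_]; first by move: es; rewrite -ke ks.
by rewrite cabs0 expr0n.
Qed.

Lemma pisum_delta (sigma : G -> G -> C) (s : {fset G}) (c : G -> C) g :
  (forall k, sigma k e = 1) ->
  pisum gl sigma s c (delta_e R gl) g = if g \in s then c g else 0.
Proof.
move=> se; rewrite /pisum /Lambda /delta_e.
case: (boolP (g \in s)) => gs.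
  rewrite (big_fsetD1 g gs) /= gmulV eqxx se mulr1 mulr1 big1_fset ?addr0 // => k.
  rewrite !inE => /andP[kg _] _; case: eqP => [/ginv_eq kg'|_]; last by rewrite !mulr0.
  by rewrite kg' eqxx in kg.
rewrite big1_fset // => k ks _.
case: eqP => [/ginv_eq kg'|_]; last by rewrite !mulr0.
by rewrite -kg' ks in gs.
Qed.


Lemma esum_tail (f : G -> R) : (forall g, 0 <= f g) ->
  (\esum_(g in [set: G]) (f g)%:E < +oo)%E ->
  forall eps, 0 < eps -> exists F0 : {fset G}, forall F : {fset G}, fsubset F0 F ->
    forall D : {fset G}, \sum_(g <- D | g \notin F) f g <= eps.
Proof.
move=> f0 Hfin eps e0.
set E := esum _ _ in Hfin.
have E0 : (0 <= E)%E by apply: esum_ge0 => g _; rewrite lee_fin.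
have Efin : E \is a fin_num by rewrite ge0_fin_numE.
set r := fine E; have Er : E = r%:E by rewrite /r fineK.
have : ((r - eps)%:E < E)%E by rewrite Er lte_fin ltrBlDr ltrDl.
case/ereal_sup_gt => _ [X [finX _] <-].
rewrite fsbig_finite // sumEFin lte_fin => HX.
exists (fset_set X) => F F0F D.
set U := (D `|` fset_set X)%fset.
pose f1 g := if g \notin F then f g else 0.
pose f2 g := if g \in F then f g else 0.
have f1p g : 0 <= f1 g by rewrite /f1; case: ifP.
have f2p g : 0 <= f2 g by rewrite /f2; case: ifP.
have h1 : \sum_(g <- D | g \notin F) f g <= \sum_(g <- U) f1 g.
  rewrite big_mkcond /=; apply: sum_sub => //; exact: fsubsetUl.
have h2 : \sum_(g <- fset_set X) f g <= \sum_(g <- U) f2 g.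
  have -> : \sum_(g <- fset_set X) f g = \sum_(g <- fset_set X) f2 g.
    by apply: eq_fbigr => x xX _; rewrite /f2 (fsubsetP F0F x xX).
  by apply: sum_sub => //; exact: fsubsetUr.
have h3 : \sum_(g <- U) f g = \sum_(g <- U) f1 g + \sum_(g <- U) f2 g.
  rewrite -big_split /=; apply: eq_bigr => g _; rewrite /f1 /f2.
  by case: (g \in F); rewrite /= ?addr0 ?add0r.
have h4 : \sum_(g <- U) f g <= r.
  by rewrite -lee_fin -Er; apply: sum_le_esum.
lra.
Qed.


Lemma sum_cond_fset (D : {fset G}) (P : pred G) (F : G -> R) :
  \sum_(g <- D | P g) F g = \sum_(g <- [fset g in D | P g]%fset) F g.
Proof. exact: big_fset_condE. Qed.

Lemma l2norm_abs (xi : G -> C) :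
  l2norm (fun k => ((cabs (xi k))%:C)%C : C) = l2norm xi.
Proof.
by rewrite /l2norm; congr sqrte; apply: eq_esum => g _; rewrite cabsR ger0_norm ?cabs_ge0.
Qed.

Lemma hc_bound (L : G -> R) (r M : R) (D : {fset G}) (P : pred G) (beta : G -> R)
    (xi : G -> C) (H : {fset G}) :
  (forall g, 0 <= beta g) -> 0 <= M ->
  (hcontent R gl (lball L r) <= M%:E)%E ->
  (forall g, g \in D -> P g -> L g <= r) ->
  (l2norm xi <= 1%:E)%E ->
  \sum_(h <- H) (\sum_(g <- D | P g) beta g * cabs (xi (gm (gi g) h))) ^+ 2
     <= M ^+ 2 * \sum_(g <- D | P g) beta g ^+ 2.
Proof.
move=> b0 M0 HM DL Hxi.
rewrite (sum_cond_fset D P).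
under eq_bigr do rewrite (sum_cond_fset D P).
set s := [fset g in D | P g]%fset.
have sL : forall g, g \in s -> L g <= r.
  by move=> g; rewrite !inE /= => /andP[] /DL H1 /H1.
set r2 := \sum_(g <- s) beta g ^+ 2.
have r20 : 0 <= r2 by apply: sumr_ge0 => g _; apply: sqr_ge0.
have [r2e|r2ne] := eqVneq r2 0.
  have bz : forall g, g \in s -> beta g = 0.
    move=> g gs; move/eqP: r2e; rewrite psumr_eq0; last by move=> i _; apply: sqr_ge0.
    by move/allP => /(_ g gs) /= /eqP /eqP; rewrite sqrf_eq0 => /eqP.
  rewrite big1 ?r2e ?mulr0 // => h _.
  rewrite big_seq big1 ?expr0n // => g gs; by rewrite bz ?mul0r.
have r2p : 0 < r2 by rewrite lt_def r2ne.
set rr := Num.sqrt r2.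
have rrp : 0 < rr by rewrite sqrtr_gt0.
pose f g : C := if g \in s then ((beta g / rr)%:C)%C else 0.
have fsum : \sum_(g <- s) (cabs (f g)) ^+ 2 = 1.
  rewrite (eq_big_seq (fun g => beta g ^+ 2 / rr ^+ 2)); last first.
    move=> g gs; rewrite /f gs cabsR ger0_norm; last by rewrite divr_ge0 ?b0 ?(ltW rrp).
    by rewrite expr_div_n.
  by rewrite -mulr_suml /rr sqr_sqrtr // divff.
have f_ge0 g : 0 <= (cabs (f g)) ^+ 2 by apply: sqr_ge0.
have l2f : l2norm f = 1%:E.
  rewrite /l2norm; have -> : \esum_(g in [set: G]) ((cabs (f g)) ^+ 2)%:E = 1%:E.
    apply/eqP; rewrite eq_le; apply/andP; split.
      apply: esum_le_of => t.
      rewrite (big_fsetID _ (mem s)) /= [X in _ + X]big1_fset ?addr0; last first.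
        move=> g; rewrite inE /= => /andP[_ gs] _; rewrite /f ifF ?cabs0 ?expr0n //; exact: negPf.
      rewrite -fsum; apply: sum_sub => //; apply/fsubsetP => g.
      by rewrite !inE /= => /andP[].
    by rewrite -fsum; apply: sum_le_esum.
  by rewrite /= sqrtr1.
set T := pisum gl (@trivial_cocycle R G) s f.
have HT : (opnorm T <= M%:E)%E.
  apply: le_trans HM; apply: ereal_sup_ubound; exists s, f; split.
    by move=> g /= gs; rewrite /lball /=; apply: sL.
  split; first by move=> g /negPf gs; rewrite /f gs.
  by split.
set xi' := fun k => ((cabs (xi k))%:C)%C : C.
have Hxi' : (l2norm xi' <= 1%:E)%E by rewrite /xi' l2norm_abs.
have := pt_bound H Hxi' HT M0.
have Tval h : cabs (T xi' h) = (\sum_(g <- s) beta g * cabs (xi (gm (gi g) h))) / rr.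
  rewrite /T /pisum /Lambda /trivial_cocycle /xi'.
  rewrite (eq_big_seq (fun g => ((beta g / rr * cabs (xi (gm (gi g) h)))%:C)%C)); last first.
    by move=> g gs; rewrite /f gs mul1r -rmorphM.
  rewrite -rmorph_sum cabsR ger0_norm; last first.
    by apply: sumr_ge0 => g _; apply: mulr_ge0; [apply: divr_ge0; [apply: b0 | exact: ltW] | exact: cabs_ge0].
  by rewrite mulr_suml; apply: eq_bigr => g _; rewrite mulrAC.
move=> Hs0.
have Hs : \sum_(h <- H) ((\sum_(g <- s) beta g * cabs (xi (gm (gi g) h))) / rr) ^+ 2 <= M ^+ 2.
  by apply: le_trans Hs0; rewrite le_eqVlt; apply/orP; left; apply/eqP/eq_bigr => h _; rewrite Tval.
have -> : \sum_(h <- H) (\sum_(g <- s) beta g * cabs (xi (gm (gi g) h))) ^+ 2 =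
   rr ^+ 2 * \sum_(h <- H) ((\sum_(g <- s) beta g * cabs (xi (gm (gi g) h))) / rr) ^+ 2.
  rewrite mulr_sumr; apply: eq_bigr => h _; rewrite expr_div_n mulrCA divff ?mulr1 //.
  by rewrite expf_neq0 // gt_eqF.
by rewrite /rr sqr_sqrtr // mulrC ler_pM2r.
Qed.


Lemma shell_sum (t : G -> nat) (N : nat) (D : {fset G}) (P : pred G) (F : G -> R) :
  (forall g, g \in D -> P g -> (t g < N)%N) ->
  \sum_(g <- D | P g) F g = \sum_(n < N) \sum_(g <- D | P g && (t g == n)) F g.
Proof.
move=> tN.
under [RHS]eq_bigr => n _ do rewrite big_mkcondr /=.
rewrite exchange_big /= big_seq_cond [RHS]big_seq_cond.
apply: eq_bigr => g /andP[gD Pg].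
rewrite (bigD1 (Ordinal (tN g gD Pg))) //= eqxx big1 ?addr0 // => n.
by rewrite -val_eqE /= eq_sym => /negPf ->.
Qed.


Lemma core (L : G -> R) (M v : nat -> R) (A : R) (w : G -> R)
    (D : {fset G}) (P : pred G) (beta : G -> R) (xi : G -> C) (H : {fset G}) :
  (forall g, 0 <= L g) ->
  (forall n, 0 < M n) -> (forall n, 0 < v n) ->
  (forall n, (hcontent R gl (lball L n.+1%:R) <= (M n)%:E)%E) ->
  (forall N, \sum_(n < N) M n ^+ 2 / v n <= A) ->
  (forall g, v (Num.truncn (L g)) <= w g) ->
  (forall g, 0 <= beta g) -> (l2norm xi <= 1%:E)%E ->
  \sum_(h <- H) (\sum_(g <- D | P g) beta g * cabs (xi (gm (gi g) h))) ^+ 2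
    <= A * \sum_(g <- D | P g) beta g ^+ 2 * w g.
Proof.
move=> L0 M0 v0 HM HA Hw b0 Hxi.
pose t g := Num.truncn (L g).
pose N := (\max_(g <- D) t g).+1.
have tN : forall g, g \in D -> P g -> (t g < N)%N.
  by move=> g gD _; rewrite ltnS; apply: (@leq_bigmax_seq _ _ predT).
have A0 : 0 <= A by have := HA 0%N; rewrite big_ord0.
pose lam n := M n ^+ 2 / v n.
have lam0 n : 0 < lam n by rewrite /lam divr_gt0 ?exprn_gt0.
pose u n h := \sum_(g <- D | P g && (t g == n)) beta g * cabs (xi (gm (gi g) h)).
have step1 : forall h, (\sum_(g <- D | P g) beta g * cabs (xi (gm (gi g) h))) ^+ 2
    <= A * \sum_(n < N) u n h ^+ 2 / lam n.
  move=> h; rewrite (shell_sum _ tN).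
  apply: le_trans (wcs (index_enum 'I_N) (fun n : 'I_N => u n h) (fun n : 'I_N => lam0 n)) _.
  apply: ler_wpM2r; last exact: HA.
  by apply: sumr_ge0 => n _; rewrite divr_ge0 ?sqr_ge0 ?ltW.
apply: le_trans (ler_sum _ (fun h _ => step1 h)) _.
rewrite -mulr_sumr; apply: ler_wpM2l => //.
rewrite exchange_big /=.
have step2 : forall n : 'I_N, \sum_(h <- H) u n h ^+ 2 / lam n <=
    v n * \sum_(g <- D | P g && (t g == n)) beta g ^+ 2.
  move=> n; rewrite -mulr_suml.
  have := @hc_bound L (n.+1%:R) (M n) D (fun g => P g && (t g == n)) beta xi H b0
     (ltW (M0 n)) (HM n).
  move=> /(_ _ Hxi) HH.
  have HH' : \sum_(h <- H) u n h ^+ 2 <= M n ^+ 2 * \sum_(g <- D | P g && (t g == n)) beta g ^+ 2.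
    apply: HH => g gD /andP[_ /eqP <-]; apply: ltW; exact: truncnS_gt.
  rewrite ler_pdivrMr //; apply: le_trans HH' _.
  rewrite /lam le_eqVlt; apply/orP; left; apply/eqP.
  by field; rewrite gt_eqF.
apply: le_trans (ler_sum _ (fun n _ => step2 n)) _.
rewrite (shell_sum _ tN); apply: ler_sum => n _.
rewrite mulr_sumr; apply: ler_sum => g /andP[_ /eqP tg].
by rewrite mulrC ler_wpM2l ?sqr_ge0 // -tg; apply: Hw.
Qed.


Lemma sum_le_esum_seq (f : G -> R) (r : seq G) : uniq r -> (forall g, 0 <= f g) ->
  ((\sum_(g <- r) f g)%:E <= \esum_(g in [set: G]) (f g)%:E)%E.
Proof.
move=> ur f0; apply: esum_ge; exists [set` r]; first by split; [exact: finite_seq|].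
by rewrite -sumEFin (fsbig_seq _ _ ur).
Qed.

Lemma shift_sum_le1 (xi : G -> C) h (D : {fset G}) : (l2norm xi <= 1%:E)%E ->
  \sum_(g <- D) (cabs (xi (gm (gi g) h))) ^+ 2 <= 1.
Proof.
move=> Hxi.
rewrite -(big_map (fun g => gm (gi g) h) predT (fun k => (cabs (xi k)) ^+ 2)).
rewrite -lee_fin; apply: le_trans (l2_le1 Hxi).
apply: sum_le_esum_seq; last by move=> g; apply: sqr_ge0.
by rewrite map_inj_uniq ?fset_uniq //; apply: shift_inj.
Qed.

Lemma cabs_Lambda (sigma : G -> G -> C) (sig1 : forall g h, cabs (sigma g h) = 1)
   g (xi : G -> C) h : cabs (Lambda gl sigma g xi h) = cabs (xi (gm (gi g) h)).
Proof. by rewrite /Lambda cabsM sig1 mul1r. Qed.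

Lemma small_part (sigma : G -> G -> C) (sig1 : forall g h, cabs (sigma g h) = 1)
   (d : G -> C) (D : {fset G}) (xi : G -> C) (eta : R) h :
  0 < eta -> (l2norm xi <= 1%:E)%E ->
  \sum_(g <- D) (cabs (d g)) ^+ 2 <= eta ^+ 2 ->
  cabs (\sum_(g <- D) d g * Lambda gl sigma g xi h) <= eta.
Proof.
move=> e0 Hxi Hd.
apply: le_trans (cabs_sum _ _ _) _.
under eq_bigr do rewrite cabsM cabs_Lambda //.
have H1 : 2 * \sum_(g <- D) cabs (d g) * cabs (xi (gm (gi g) h)) <=
    \sum_(g <- D) ((cabs (d g)) ^+ 2 / eta + eta * (cabs (xi (gm (gi g) h))) ^+ 2).
  by rewrite mulr_sumr; apply: ler_sum => g _; apply: amgm.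
rewrite big_split /= -mulr_suml -mulr_sumr in H1.
have H2 := shift_sum_le1 h D Hxi.
have H3 : (\sum_(g <- D) (cabs (d g)) ^+ 2) / eta <= eta.
  by rewrite ler_pdivrMr // -expr2.
have H4 : eta * \sum_(g <- D) (cabs (xi (gm (gi g) h))) ^+ 2 <= eta.
  by rewrite ler_piMr // ltW.
lra.
Qed.

Lemma pointwise (sigma : G -> G -> C) (sig1 : forall g h, cabs (sigma g h) = 1)
    (x : op R G) (s F : {fset G}) (c : G -> C) (xi : G -> C) (eta : R) h :
  0 < eta -> (l2norm xi <= 1%:E)%E ->
  (opnorm (opsub x (pisum gl sigma s c)) <= eta%:E)%E ->
  \sum_(g <- (s `|` F)%fset) (cabs (xhat gl x g - (if g \in s then c g else 0))) ^+ 2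
     <= eta ^+ 2 ->
  cabs (opsub x (pisum gl sigma F (xhat gl x)) xi h) <=
    2 * eta + \sum_(g <- (s `|` F)%fset | g \notin F)
                 cabs (xhat gl x g) * cabs (xi (gm (gi g) h)).
Proof.
move=> e0 Hxi Hc Hd.
set a := xhat gl x; set D := (s `|` F)%fset.
set P := pisum gl sigma s c.
have e1 : cabs (x xi h - P xi h) <= eta.
  exact: (pt_bound1 h Hxi Hc (ltW e0)).
pose Lg g := Lambda gl sigma g xi h.
have eP : P xi h = \sum_(g <- D) (if g \in s then c g else 0) * Lg g.
  rewrite /P /pisum (eq_big_seq (fun g => (if g \in s then c g else 0) * Lg g)); last first.
    by move=> g gs; rewrite gs.
  apply: big_fset_incl; first exact: fsubsetUl.
  by move=> g _ /negPf ->; rewrite mul0r.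
have eS : pisum gl sigma F a xi h = \sum_(g <- D) (if g \in F then a g else 0) * Lg g.
  rewrite /pisum (eq_big_seq (fun g => (if g \in F then a g else 0) * Lg g)); last first.
    by move=> g gs; rewrite gs.
  apply: big_fset_incl; first exact: fsubsetUr.
  by move=> g _ /negPf ->; rewrite mul0r.
pose d g := a g - (if g \in s then c g else 0).
have eD : P xi h - pisum gl sigma F a xi h =
   - \sum_(g <- D) d g * Lg g + \sum_(g <- D) (if g \notin F then a g else 0) * Lg g.
  rewrite eP eS -sumrB -sumrN -big_split /=; apply: eq_bigr => g _.
  rewrite /d; case: (g \in F) => /=; rewrite ?mul0r; ring.
have -> : opsub x (pisum gl sigma F a) xi h =
    (x xi h - P xi h) + (P xi h - pisum gl sigma F a xi h).
  by rewrite /opsub; ring.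
rewrite eD.
apply: le_trans (cabsD _ _) _.
have -> : 2 * eta + \sum_(g <- D | g \notin F) cabs (a g) * cabs (xi (gm (gi g) h)) =
   eta + (eta + \sum_(g <- D | g \notin F) cabs (a g) * cabs (xi (gm (gi g) h))) by ring.
apply: lerD => //.
apply: le_trans (cabsD _ _) _; apply: lerD.
  by rewrite cabsN; apply: small_part.
apply: le_trans (cabs_sum _ _ _) _.
rewrite [X in _ <= X]big_mkcond /=; apply: ler_sum => g _.
rewrite cabsM cabs_Lambda //; case: (g \in F) => /=; last by [].
by rewrite expr0n /= addr0 sqrtr0 mul0r.
Qed.


Lemma gen (L : G -> R) (M v : nat -> R) (A : R) (w : G -> R) :
  (forall g, 0 <= L g) ->
  (forall n, 0 < M n) -> (forall n, 0 < v n) ->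
  (forall n, (hcontent R gl (lball L n.+1%:R) <= (M n)%:E)%E) ->
  (forall N, \sum_(n < N) M n ^+ 2 / v n <= A) ->
  (forall g, v (Num.truncn (L g)) <= w g) ->
  forall sigma : G -> G -> C, cocycle gl sigma ->
  forall x : op R G, in_Cred gl sigma x ->
  (\esum_(g in [set: G]) ((cabs (xhat gl x g)) ^+ 2 * w g)%:E < +oo)%E ->
  fourier_converges gl sigma x.
Proof.
move=> L0 M0 v0 HM HA Hw sigma [sig1 [_ sige]] x Hx Hsum eps e0.
have A0 : 0 <= A by have := HA 0%N; rewrite big_ord0.
have w0 g : 0 < w g by apply: lt_le_trans (v0 _) (Hw g).
pose tau := eps ^+ 2 / (8 * (A + 1)).
have tau0 : 0 < tau by rewrite /tau divr_gt0 ?exprn_gt0 // mulr_gt0 // ltr_wpDl.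
have f0 g : 0 <= (cabs (xhat gl x g)) ^+ 2 * w g by rewrite mulr_ge0 ?sqr_ge0 ?ltW.
have [F0 HF0] := esum_tail f0 Hsum tau0.
exists F0 => F F0F.
apply: (@opnorm_lt _ (3 / 4 * eps ^+ 2)).
- by rewrite mulr_ge0 ?sqr_ge0.
- by have := exprn_gt0 2 e0; lra.
- exact: e0.
move=> xi Hxi H.
set n := size H.
pose eta := eps / (4 * (n%:R + 1)).
have n1 : 0 < n%:R + 1 :> R by rewrite ltr_wpDl.
have eta0 : 0 < eta by rewrite /eta divr_gt0 // mulr_gt0.
have [s [c Hc]] := Hx eta eta0.
set a := xhat gl x; set D := (s `|` F)%fset.
have Hd : \sum_(g <- D) (cabs (a g - (if g \in s then c g else 0))) ^+ 2 <= eta ^+ 2.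
  have := pt_bound D (delta_ball) (ltW Hc) (ltW eta0).
  apply: le_trans; rewrite le_eqVlt; apply/orP; left; apply/eqP/eq_bigr => g _.
  by rewrite /opsub (pisum_delta _ _ _ (fun k => (sige k).1)).
pose u h := \sum_(g <- D | g \notin F) cabs (a g) * cabs (xi (gm (gi g) h)).
have Hpw h : cabs (opsub x (pisum gl sigma F a) xi h) <= 2 * eta + u h.
  exact: (pointwise sig1 h eta0 Hxi (ltW Hc) Hd).
have Hcore : \sum_(h <- H) u h ^+ 2 <= A * tau.
  apply: le_trans (@core L M v A w D (fun g => g \notin F) (fun g => cabs (a g)) xi H
     L0 M0 v0 HM HA Hw (fun g => cabs_ge0 (a g)) Hxi) _.
  by apply: ler_wpM2l => //; apply: HF0.
have Hsq h : (cabs (opsub x (pisum gl sigma F a) xi h)) ^+ 2 <= 2 * u h ^+ 2 + 8 * eta ^+ 2.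
  have u0 : 0 <= u h by apply: sumr_ge0 => g _; rewrite mulr_ge0 ?cabs_ge0.
  have c0 := cabs_ge0 (opsub x (pisum gl sigma F a) xi h).
  have H1 : (cabs (opsub x (pisum gl sigma F a) xi h)) ^+ 2 <= (2 * eta + u h) ^+ 2.
    apply: lerXn2r; rewrite ?nnegrE //; first [exact: (Hpw h) | exact: (le_trans c0 (Hpw h))].
  apply: le_trans H1 _.
  have : 0 <= (u h - 2 * eta) ^+ 2 by apply: sqr_ge0.
  rewrite !expr2; lra.
apply: le_trans (ler_sum _ (fun h _ => Hsq h)) _.
rewrite big_split /= -mulr_sumr big_const_seq count_predT iter_addr_0 -/n.
have T1 : 2 * (A * tau) <= eps ^+ 2 / 4.
  have -> : 2 * (A * tau) = eps ^+ 2 / 4 * (A / (A + 1)).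
    by rewrite /tau; field; rewrite gt_eqF // ltr_wpDl.
  rewrite ler_piMr ?divr_ge0 ?sqr_ge0 //.
  by rewrite ler_pdivrMr ?ltr_wpDl // mul1r lerDl.
have T2 : (8 * eta ^+ 2) *+ n <= eps ^+ 2 / 2.
  have -> : (8 * eta ^+ 2) *+ n = eps ^+ 2 / 2 * (n%:R / (n%:R + 1) ^+ 2).
    by rewrite -mulr_natr /eta; field; rewrite gt_eqF.
  rewrite ler_piMr ?divr_ge0 ?sqr_ge0 //.
  rewrite ler_pdivrMr ?exprn_gt0 // mul1r expr2.
  have : 0 <= n%:R :> R by [].
  nra.
have T3 : 2 * \sum_(h <- H) u h ^+ 2 <= 2 * (A * tau).
  by rewrite ler_pM2l.
lra.
Qed.


Lemma hcontent_mono (E E' : set G) : E `<=` E' ->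
  (hcontent R gl E <= hcontent R gl E')%E.
Proof.
move=> EE'; apply: ereal_sup_le => y [s [f [sE rest]]].
by exists s, f; split => //; apply: subset_trans EE'.
Qed.

End Main.

Lemma inv_sq_sum (R : realType) (N : nat) :
  \sum_(n < N) 1 / (n.+1%:R : R) ^+ 2 <= 2 - 2 / N.+1%:R.
Proof.
elim: N => [|N IH]; first by rewrite big_ord0 divr1 subrr.
rewrite big_ord_recr /=.
set a : R := N.+1%:R.
have a1 : 1 <= a by rewrite /a ler1n.
have a0 : 0 < a by apply: lt_le_trans a1.
have -> : (N.+2%:R : R) = a + 1 by rewrite /a -natr1.
have H : 1 / a ^+ 2 <= 2 / a - 2 / (a + 1).
  rewrite -subr_ge0.
  have -> : 2 / a - 2 / (a + 1) - 1 / a ^+ 2 = (a - 1) / (a ^+ 2 * (a + 1)).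
    by field; rewrite ?gt_eqF ?ltr_wpDr // ltW.
  by rewrite divr_ge0 ?subr_ge0 // mulr_ge0 ?sqr_ge0 // addr_ge0 // ltW.
rewrite -/a in IH.
apply: le_trans (lerD IH H) _; rewrite le_eqVlt; apply/orP; left; apply/eqP; ring.
Qed.

Section Final.
Variables (R : realType) (G : countType) (gl : group_laws G).
Local Notation C := (R[i]).

Lemma part1 (L : G -> R) (L0 : forall g, 0 <= L g) :
  poly_Hgrowth gl L ->
     exists s : R, 0 < s /\
       forall sigma : G -> G -> R[i], cocycle gl sigma ->
       forall x : op R G, in_Cred gl sigma x ->
         (\esum_(g in [set: G])
             ((cabs (xhat gl x g)) ^+ 2 * (1 + L g) `^ s)%:E < +oo)%E ->
         fourier_converges gl sigma x.
Proof.
case=> K [p [K0 [p0 HK]]].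
have s0 : 0 < 2 * p + 2 by rewrite addr_gt0 // mulr_gt0.
exists (2 * p + 2); split => // sigma cs x Hx Hs.
pose M n := K * (n.+2%:R : R) `^ p.
pose v n := (n.+1%:R : R) `^ (2 * p + 2).
pose A := K ^+ 2 * (2 `^ p) ^+ 2 * 2.
apply: (@gen R G gl L M v A (fun g => (1 + L g) `^ (2 * p + 2))) => //.
- by move=> n; rewrite /M mulr_gt0 // powR_gt0.
- by move=> n; rewrite /v powR_gt0.
- by move=> n; have := HK n.+1%:R (ler0n _ _); rewrite nat1r.
- move=> N.
  have Hterm : forall n : nat, M n ^+ 2 / v n <= K ^+ 2 * (2 `^ p) ^+ 2 * (1 / (n.+1%:R) ^+ 2).
    move=> n; set y : R := n.+1%:R.
    have y0 : 0 < y by rewrite /y ltr0Sn.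
    have ev : v n = (y `^ p) ^+ 2 * y ^+ 2.
      rewrite /v (_ : 2 * p + 2 = p + (p + 2%:R)); last by ring.
      have yn0 : (y != 0) by rewrite gt_eqF.
      rewrite powRD ?yn0 ?implybT // powRD ?yn0 ?implybT // powR_mulrn ?ltW //.
      by rewrite expr2 mulrA.
    have yp : 0 < y `^ p by apply: powR_gt0.
    rewrite ev ler_pdivrMr ?mulr_gt0 ?exprn_gt0 //.
    have -> : K ^+ 2 * 2 `^ p ^+ 2 * (1 / y ^+ 2) * ((y `^ p) ^+ 2 * y ^+ 2) =
        (K * (2 `^ p * y `^ p)) ^+ 2.
      by field; rewrite gt_eqF.
    rewrite /M; apply: lerXn2r.
    - by rewrite nnegrE mulr_ge0 ?powR_ge0 // ltW.
    - by rewrite nnegrE mulr_ge0 ?mulr_ge0 ?powR_ge0 // ltW.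
    rewrite ler_pM2l // -powRM //.
    apply: ge0_ler_powR; first exact: ltW.
    - by rewrite nnegrE ler0n.
    - by rewrite nnegrE mulr_ge0 ?ler0n // ltW.
    by rewrite /y -natrM ler_nat; lia.
  apply: le_trans (@ler_sum _ _ (index_enum 'I_N) predT _ _ (fun (n : 'I_N) _ => Hterm n)) _.
  rewrite -mulr_sumr /A ler_wpM2l ?mulr_ge0 ?sqr_ge0 ?(ltW K0) //.
  apply: le_trans (inv_sq_sum R N) _.
  by rewrite lerBlDr lerDl divr_ge0.
- move=> g; rewrite /v; apply: ge0_ler_powR; first exact: ltW.
  + by rewrite nnegrE ler0n.
  + by rewrite nnegrE addr_ge0.
  by rewrite -nat1r lerD2l truncn_le.
Qed.


Lemma part2 (L : G -> R) (L0 : forall g, 0 <= L g) :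
  subexp_Hgrowth gl L ->
     forall sigma : G -> G -> R[i], cocycle gl sigma ->
     forall x : op R G, in_Cred gl sigma x ->
       (exists t : R, 0 < t /\
          (\esum_(g in [set: G])
             ((cabs (xhat gl x g)) ^+ 2 * expR (t * L g))%:E < +oo)%E) ->
       fourier_converges gl sigma x.
Proof.
move=> Hsub sigma cs x Hx [t [t0 Hs]].
have b1 : 1 < expR (t / 4) by rewrite expR_gt1 divr_gt0.
have [r0 Hr0] := Hsub _ b1.
pose m (n : nat) := Num.max (n.+1%:R) r0.
pose M n := expR (t / 4 * m n).
pose v (n : nat) := expR (t * n%:R).
pose C0 := expR (t / 2 * (1 + `|r0|)).
pose q := expR (- (t / 2)).
have q0 : 0 < q by apply: expR_gt0.
have q1 : q < 1 by rewrite /q -expR0 ltr_expR oppr_lt0 divr_gt0.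
apply: (@gen R G gl L M v (C0 / (1 - q)) (fun g => expR (t * L g))) => //.
- by move=> n; apply: expR_gt0.
- by move=> n; apply: expR_gt0.
- move=> n.
  have h1 : (n.+1%:R : R) <= m n by rewrite /m le_max lexx.
  have h2 : r0 <= m n by rewrite /m le_max lexx orbT.
  have sub : lball L n.+1%:R `<=` lball L (m n).
    by move=> g; rewrite /lball /= => Lg; apply: le_trans h1.
  apply: le_trans (hcontent_mono R gl sub) _.
  apply: ltW; have := Hr0 _ h2; by rewrite /M -expRM.
- move=> N.
  have Hterm : forall n : nat, M n ^+ 2 / v n <= C0 * q ^+ n.
    move=> n; rewrite /M /v /C0 /q -expRM_natl -expRB -expRM_natr -expRD ler_expR.
    have hm : m n <= n%:R + 1 + `|r0|.
      rewrite /m ge_max; apply/andP; split.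
        by rewrite -natr1 lerDl.
      by apply: le_trans (ler_norm r0) _; rewrite lerDr addr_ge0.
    have n0 : 0 <= n%:R :> R by [].
    have : t / 2 * m n <= t / 2 * (n%:R + 1 + `|r0|) by rewrite ler_pM2l ?divr_gt0.
    have -> : (2%:R * (t / 4 * m n) - t * n%:R) = t / 2 * m n - t * n%:R.
      by field.
    have -> : t / 2 * (1 + `|r0|) + - (t / 2) * n%:R =
       t / 2 * (n%:R + 1 + `|r0|) - t * n%:R by field.
    lra.
  apply: le_trans (@ler_sum _ _ (index_enum 'I_N) predT _ _ (fun (n : 'I_N) _ => Hterm n)) _.
  have := geometric_le_lim N (ltW (expR_gt0 (t / 2 * (1 + `|r0|)))) q0.
  rewrite ger0_norm ?(ltW q0) // => /(_ q1).
  by rewrite seriesEord /=.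
- by move=> g; rewrite /v ler_expR ler_pM2l // truncn_le.
Qed.

End Final.

Unset Implicit Arguments.

Theorem theorem3p15 (R : realType) (G : countType) (gl : group_laws G)
    (L : G -> R) (L_ge0 : forall g, 0 <= L g) (L_proper : proper_length L) :
  (poly_Hgrowth gl L ->
     exists s : R, 0 < s /\
       forall sigma : G -> G -> R[i], cocycle gl sigma ->
       forall x : op R G, in_Cred gl sigma x ->
         (\esum_(g in [set: G])
             ((cabs (xhat gl x g)) ^+ 2 * (1 + L g) `^ s)%:E < +oo)%E ->
         fourier_converges gl sigma x) /\
  (subexp_Hgrowth gl L ->
     forall sigma : G -> G -> R[i], cocycle gl sigma ->
     forall x : op R G, in_Cred gl sigma x ->
       (exists t : R, 0 < t /\
          (\esum_(g in [set: G])
             ((cabs (xhat gl x g)) ^+ 2 * expR (t * L g))%:E < +oo)%E) ->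
       fourier_converges gl sigma x).
Proof.
split; [exact: part1 | exact: part2].
Qed.
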